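(* Let $(G,L,v)$ be a reachable triple with $\deg_G(v)=2$, and let $i\in[4]$ be a color. Then one of the following holds: (1) the vertex $v$ and its two neighbors form a triangle in $G$; (2) $P(G,L,v,i,D)\le\frac{13}{27}$ for all integers $D\ge2$.
   Context: Colors are $[4]=\{1,2,3,4\}$. A list-coloring instance $(G,L)$ is a finite simple graph $G=(V,E)$ with $L:V\to 2^{[4]}$. For a vertex $v$, $G_v$ is $G$ with $v$ and its incident edges removed, and $G_{v,w}=(G_v)_w$. If $v$ has neighbors $v_1,\dots,v_d$ (in a fixed order), then for $k\in[d]$ and a color $j$, $L_{k,j}$ is the list assignment on $G_v$ with $L_{k,j}(v_\ell)=L(v_\ell)\setminus\{j\}$ for $\ell<k$ and $L_{k,j}(u)=L(u)$ for all other vertices $u$ (so $L_{1,j}=L$). A triple $(G,L,v)$ with $v\in V$ is reachable if $\deg_G(u)\le3$ and $|L(u)|\ge\deg_G(u)+1$ for every $u\in V$, and moreover $\deg_G(v)\le2$ and $|L(v)|\ge\deg_G(v)+2$. The procedure $P(G,L,v,i,D)$ ($i\in[4]$, $D$ an integer) is defined recursively (empty products equal $1$): (a) If $i\notin L(v)$, return $0$. Otherwise, if $D\le 0$ or $\deg_G(v)=0$, return $1/|L(v)|$. (b) If $\deg_G(v)=1$ with neighbor $v_1$: let $x=P(G_v,L,v_1,i,D-1)$. If $|L(v)|=2$, say $L(v)=\{i,j\}$, let $y=P(G_v,L,v_1,j,D-1)$ and return $\frac{1-x}{2-x-y}$. If $|L(v)|=4$, return $\frac{1-x}{3}$. If $|L(v)|=3$,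 let $j$ be the unique color in $[4]\setminus L(v)$, $y=P(G_v,L,v_1,j,D-1)$, and return $\frac{1-x}{2+y}$. (c) If $\deg_G(v)=2$: order its neighbors $v_1,v_2$ so that $\deg_G(v_1)\ge\deg_G(v_2)$ and, if $\deg_G(v_1)=\deg_G(v_2)=1$, so that $i\notin L(v_1)$ implies $i\notin L(v_2)$. Let $u_1,\dots,u_{d_1}$ be the neighbors of $v_1$ in $G_v$ (fixed order) and for $k\in[d_1]$, $w\in[4]$ let $L'_{k,w}$ be the list assignment on $G_{v,v_1}$ with $L'_{k,w}(u_\ell)=L(u_\ell)\setminus\{w\}$ for $\ell<k$ and $L'_{k,w}(u)=L(u)$ otherwise. Set $x_{k,w}=P(G_{v,v_1},L'_{k,w},u_k,w,D-1)$ for $k\in[d_1]$, $w\in L(v_1)$. For $j\in L(v)$ set $f_j=0$ if $j\notin L(v_1)$ and otherwise $f_j=\frac{\prod_{k=1}^{d_1}(1-x_{k,j})}{\sum_{w\in L(v_1)}\prod_{k=1}^{d_1}(1-x_{k,w})}$, and set $y_j=P(G_v,L_{2,j},v_2,j,D-1)$. Return $\frac{(1-f_i)(1-y_i)}{\sum_{j\in L(v)}(1-f_j)(1-y_j)}$. (d) If $\deg_G(v)=3$ with neighbors $v_1,v_2,v_3$: for $j\in L(v)$ let $x_j=P(G_v,L_{1,j},v_1,j,D-1)$, $y_j=P(G_v,L_{2,j},v_2,j,D-1)$, $z_j=P(G_v,L_{3,j},v_3,j,D-1)$, and return $\frac{(1-x_i)(1-y_i)(1-z_i)}{\sum_{j\in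 L(v)}(1-x_j)(1-y_j)(1-z_j)}$. For reachable triples, all recursive calls are again on reachable triples and case (d) never occurs. *)

(* Defs.v *)
From HB Require Import structures.
From mathcomp Require Import all_boot all_order all_algebra.
Set Implicit Arguments. Unset Strict Implicit. Unset Printing Implicit Defensive.
Import Order.TTheory GRing.Theory Num.Theory.
Local Open Scope ring_scope.

(* A graph is the subgraph induced on a vertex set S : {set T} by a
   symmetric irreflexive relation e : rel T.
   Removing a vertex v from G is S :\ v.  The "fixed order" of neighbors
   is the enumeration order of the finType T. *)

Section Procedure.
Variable R : realFieldType.
Variable T : finType.
Variable e : rel T.

Definition nbrs (S : {set T}) (u : T) : seq T :=
  [seq w <- enum T | (w \in S) && e u w].

Definition deg (S : {set T}) (u : T) : nat := size (nbrs S u).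

(* L_{k,j}: remove color j from the lists of the first k vertices of ns
   (k is the 0-based index of the k+1-th neighbor) *)
Definition restr (L : T -> {set 'I_4}) (ns : seq T) (k : nat) (j : 'I_4)
  : T -> {set 'I_4} :=
  fun u => if u \in take k ns then L u :\ j else L u.

Fixpoint Pn (n : nat) (S : {set T}) (L : T -> {set 'I_4}) (v : T)
  (i : 'I_4) {struct n} : R :=
  if i \notin L v then 0 else
  match n with
  | 0%N => (#|L v|%:R)^-1
  | n'.+1 =>
    let ns := nbrs S v in
    let Sv := S :\ v in
    match ns with
    | [::] => (#|L v|%:R)^-1
    | [:: v1] =>
        let x := Pn n' Sv L v1 i in
        if #|L v| == 2%N then
          let j := odflt i [pick j in L v :\ i] in
          let y := Pn n' Sv L v1 j in
          (1 - x) / (2%:R - x - y)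
        else if #|L v| == 4%N then (1 - x) / 3%:R
        else if #|L v| == 3%N then
          let j := odflt i [pick j in ~: L v] in
          let y := Pn n' Sv L v1 j in
          (1 - x) / (2%:R + y)
        else 0
    | [:: a; b] =>
        let swap := (deg S a < deg S b)%N ||
          [&& deg S a == 1%N, deg S b == 1%N, i \notin L a & i \in L b] in
        let v1 := if swap then b else a in
        let v2 := if swap then a else b in
        let us := nbrs Sv v1 in
        let Svv1 := Sv :\ v1 in
        let g (w : 'I_4) : R :=
          \prod_(k < size us)
            (1 - Pn n' Svv1 (restr L us k w) (nth v us k) w) in
        let f (j : 'I_4) : R :=
          if j \in L v1 then g j / \sum_(w in L v1) g w else 0 in
        let y (j : 'I_4) : R := Pn n' Sv (restr L [:: v1; v2] 1 j) v2 j in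
        (1 - f i) * (1 - y i) / \sum_(j in L v) (1 - f j) * (1 - y j)
    | [:: a; b; c] =>
        let z (k : nat) (j : 'I_4) : R :=
          Pn n' Sv (restr L ns k j) (nth v ns k) j in
        (1 - z 0%N i) * (1 - z 1%N i) * (1 - z 2%N i) /
          \sum_(j in L v) (1 - z 0%N j) * (1 - z 1%N j) * (1 - z 2%N j)
    | _ => 0
    end
  end.

(* P(G, L, v, i, D) with D an integer: D <= 0 is the base case *)
Definition P (S : {set T}) (L : T -> {set 'I_4}) (v : T) (i : 'I_4)
  (D : int) : R :=
  Pn (if D is Posz n then n else 0%N) S L v i.

Definition reachable (S : {set T}) (L : T -> {set 'I_4}) (v : T) : Prop :=
  v \in S /\
  (forall u, u \in S -> (deg S u <= 3)%N /\ (deg S u + 1 <= #|L u|)%N) /\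
  (deg S v <= 2)%N /\ (deg S v + 2 <= #|L v|)%N.

Definition triangle_at (S : {set T}) (v : T) : Prop :=
  exists v1 v2, [/\ v1 \in nbrs S v, v2 \in nbrs S v, v1 != v2 & e v1 v2].

End Procedure.

(* Main.v *)
Require Import Defs.
From HB Require Import structures.
From mathcomp Require Import all_boot all_order all_algebra.
From mathcomp Require Import ring lra zify.
Import Order.TTheory GRing.Theory Num.Theory.
Set Implicit Arguments. Unset Strict Implicit. Unset Printing Implicit Defensive.
Local Open Scope ring_scope.

Lemma nbrs_uniq (T : finType) (e : rel T) S u : uniq (nbrs e S u).
Proof. by rewrite /nbrs filter_uniq // enum_uniq. Qed.

Lemma mem_nbrs (T : finType) (e : rel T) S u w :
  (w \in nbrs e S u) = (w \in S) && e u w.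
Proof. by rewrite /nbrs mem_filter mem_enum andbT. Qed.

Lemma nbrsD1 (T : finType) (e : rel T) S u v :
  nbrs e (S :\ v) u = [seq w <- nbrs e S u | w != v].
Proof.
rewrite /nbrs -[RHS]filter_predI; apply: eq_filter => w /=.
by rewrite in_setD1 andbA [(_ != _) && _]andbC.
Qed.

Lemma degD1_le (T : finType) (e : rel T) S u v :
  (deg e (S :\ v) u <= deg e S u)%N.
Proof. by rewrite /deg nbrsD1 size_filter count_size. Qed.

Lemma degD1_eq (T : finType) (e : rel T) S u v :
  v \in nbrs e S u -> deg e (S :\ v) u = (deg e S u).-1.
Proof.
move=> hv; rewrite /deg nbrsD1 size_filter.
have := count_predC (pred1 v) (nbrs e S u).
have -> : count (pred1 v) (nbrs e S u) = 1%N.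
  by rewrite (count_uniq_mem v (nbrs_uniq e S u)) hv.
have -> : count (predC (pred1 v)) (nbrs e S u) = count (fun w => w != v) (nbrs e S u) by [].
by move=> <-.
Qed.

Definition AllR (T : finType) (e : rel T) (S : {set T}) (L : T -> {set 'I_4}) :=
  forall x, x \in S -> (deg e S x <= 3)%N /\ (deg e S x + 1 <= #|L x|)%N.

Lemma reach_AllR (T : finType) (e : rel T) S L u :
  reachable e S L u -> AllR e S L.
Proof. by case=> _ []. Qed.

Lemma nbrs_sym (T : finType) (e : rel T) (e_sym : symmetric e) (S : {set T}) (u v : T) :
  u \in S -> v \in nbrs e S u -> u \in nbrs e S v.
Proof. by move=> hu; rewrite !mem_nbrs hu e_sym => /andP[]. Qed.

Lemma AllR_step (T : finType) (e : rel T) (e_sym : symmetric e) (S : {set T}) (L L' : T -> {set 'I_4}) (v : T) :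
  AllR e S L -> v \in S ->
  (forall x, x \notin nbrs e S v -> L' x = L x) ->
  (forall x, (#|L x| <= #|L' x| + 1)%N) ->
  AllR e (S :\ v) L'.
Proof.
move=> hA hv hL hc x; rewrite in_setD1 => /andP[xv xS].
have [h1 h2] := hA x xS.
case: (boolP (x \in nbrs e S v)) => hx.
  have hvx : v \in nbrs e S x by apply: nbrs_sym.
  rewrite (degD1_eq hvx); have := hc x; split; first by lia.
  have : (0 < deg e S x)%N by rewrite /deg; case: (nbrs e S x) hvx.
  lia.
rewrite hL //; have := degD1_le e S x v; split; lia.
Qed.

Lemma reach_step (T : finType) (e : rel T) (e_sym : symmetric e) (e_irr : irreflexive e)
  (S : {set T}) (L L' : T -> {set 'I_4}) (v u : T) :
  AllR e S L -> v \in S ->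
  (forall x, x \notin nbrs e S v -> L' x = L x) ->
  (forall x, (#|L x| <= #|L' x| + 1)%N) ->
  u \in nbrs e S v -> L' u = L u ->
  reachable e (S :\ v) L' u.
Proof.
move=> hA hv hL hc hu hLu.
have hA' := AllR_step e_sym hA hv hL hc.
have uS : u \in S by move: hu; rewrite mem_nbrs => /andP[].
have uv : u != v.
  apply/eqP => E; move: hu; rewrite mem_nbrs E.
  by rewrite e_irr andbF.
have hvu : v \in nbrs e S u by apply: nbrs_sym.
have [h1 h2] := hA u uS.
have : (0 < deg e S u)%N by rewrite /deg; case: (nbrs e S u) hvu.
rewrite /reachable in_setD1 uv uS (degD1_eq hvu) hLu; split => //; split => //.
lia.
Qed.

Lemma card_setD1_ge (A : {set 'I_4}) j : (#|A| <= #|A :\ j| + 1)%N.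
Proof. rewrite (cardsD1 j A); case: (j \in A) => /=; lia. Qed.

Lemma restr_out (T : finType) (L : T -> {set 'I_4}) ns k j x :
  x \notin ns -> restr L ns k j x = L x.
Proof.
move=> hx; rewrite /restr; case: ifP => // h.
by move: hx; rewrite -(cat_take_drop k ns) mem_cat h.
Qed.

Lemma restr_card (T : finType) (L : T -> {set 'I_4}) ns k j x :
  (#|L x| <= #|restr L ns k j x| + 1)%N.
Proof. rewrite /restr; case: ifP => _; [exact: card_setD1_ge | lia]. Qed.

Lemma nth_notin_take (T : eqType) (s : seq T) x0 k :
  uniq s -> (k < size s)%N -> nth x0 s k \notin take k s.
Proof.
move=> hu hk.
have : nth x0 s k \in drop k s.
  have -> : nth x0 s k = nth x0 (drop k s) 0 by rewrite nth_drop addn0.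
  rewrite mem_nth // size_drop; lia.
move: hu; rewrite -{1}(cat_take_drop k s) cat_uniq => /and3P[_ hd _] hin.
apply/negP => ht; move/hasP: hd; apply; by exists (nth x0 s k).
Qed.

Lemma restr_nth (T : finType) (L : T -> {set 'I_4}) (s : seq T) x0 k j :
  uniq s -> (k < size s)%N -> restr L s k j (nth x0 s k) = L (nth x0 s k).
Proof. by move=> hu hk; rewrite /restr (negbTE (nth_notin_take x0 hu hk)). Qed.

Lemma sum_others (R : realFieldType) (A : {set 'I_4}) (g : 'I_4 -> R) lo j :
  (forall w, lo <= g w) -> j \in A ->
  g j + (#|A|.-1)%:R * lo <= \sum_(w in A) g w.
Proof.
move=> hg hj; rewrite (bigD1 j) //= lerD2l.
have -> : (#|A|.-1)%:R * lo = \sum_(w in A | w != j) lo.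
  rewrite sumr_const mulr_natl; congr (_ *+ _).
  rewrite (cardsD1 j A) hj /=.
  by apply: eq_card => w; rewrite !inE andbC.
by apply: ler_sum => w _; apply: hg.
Qed.

Lemma sum_le_card (R : realFieldType) (A : {set 'I_4}) (g : 'I_4 -> R) :
  (forall w, g w <= 1) -> \sum_(w in A) g w <= #|A|%:R.
Proof.
move=> hg; rewrite -sum1_card natr_sum; by apply: ler_sum.
Qed.

Lemma card4 (A : {set 'I_4}) : (#|A| <= 4)%N.
Proof. by have := max_card A; rewrite card_ord. Qed.

Lemma f_facts (R : realFieldType) (L1 : {set 'I_4}) (g : 'I_4 -> R) (lo : R) (f : 'I_4 -> R) :
  0 < lo -> (forall w, lo <= g w <= 1) -> 3/4 <= (#|L1|.-1)%:R * lo ->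
  (forall j, f j = if j \in L1 then g j / \sum_(w in L1) g w else 0) ->
  [/\ forall j, 0 <= f j <= 4/7, \sum_j f j = 1,
      (1 <= (#|L1|.-1)%:R * lo -> forall j, f j <= 1/2) &
      (1/4 <= lo -> forall j, j \in L1 -> 1/16 <= f j)].
Proof.
move=> lo0 hg hc hf.
have hglo w : lo <= g w by case/andP: (hg w).
have hg1 w : g w <= 1 by case/andP: (hg w).
have hne : (0 < #|L1|)%N.
  case: (posnP #|L1|) => // h; move: hc; rewrite h /= mul0r; lra.
have [j0 hj0] : exists j, j \in L1 by apply/set0Pn; rewrite -card_gt0.
have Gpos : 0 < \sum_(w in L1) g w.
  have := sum_others hglo hj0; have := hglo j0.
  have : 0 <= (#|L1|.-1)%:R * lo by apply: mulr_ge0 => //; apply: ltW.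
  lra.
have Gle := sum_le_card L1 hg1.
have hcard : (#|L1|%:R : R) <= 4 by rewrite (ler_nat R #|L1| 4) card4.
split.
- move=> j; rewrite hf; case: ifP => hj; last by lra.
  have := sum_others hglo hj; have := hglo j; have := hg1 j.
  move: (\sum_(w in L1) g w) Gpos => G Gp h1 h2 h3.
  apply/andP; split; first by apply: divr_ge0 => //; lra.
  rewrite ler_pdivrMr //; lra.
- under eq_bigr do rewrite hf.
  rewrite -big_mkcond /= -mulr_suml mulfV //; lra.
- move=> hc1 j; rewrite hf; case: ifP => hj; last by lra.
  have := sum_others hglo hj; have := hglo j; have := hg1 j.
  move: (\sum_(w in L1) g w) Gpos => G Gp h1 h2 h3.
  rewrite ler_pdivrMr //; lra.
- move=> hlo j hj; rewrite hf hj.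
  have := hglo j.
  move: (\sum_(w in L1) g w) Gpos Gle => G Gp Gl h2.
  rewrite ler_pdivlMr //; lra.
Qed.

Definition lb (R : realFieldType) (m : nat) : R :=
  if m == 2%N then 1/2 else if m == 3%N then 1/5 else 1/13.

Definition Good (R : realFieldType) (T : finType) (e : rel T) (n : nat) :=
  forall (S : {set T}) (L : T -> {set 'I_4}) (u : T) (c : 'I_4), reachable e S L u ->
  [/\ 0 <= Pn R e n S L u c, Pn R e n S L u c <= 1/2 &
      (c \in L u -> lb R #|L u| <= Pn R e n S L u c)].


Definition swapb (T : finType) (e : rel T) (S : {set T}) (L : T -> {set 'I_4}) (i : 'I_4) (a b : T) :=
  (deg e S a < deg e S b)%N ||
  [&& deg e S a == 1%N, deg e S b == 1%N, i \notin L a & i \in L b].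

Definition Gf (R : realFieldType) (T : finType) (e : rel T) n (Sv : {set T})
  (L : T -> {set 'I_4}) (v1 x0 : T) (w : 'I_4) : R :=
  \prod_(k < size (nbrs e Sv v1))
     (1 - Pn R e n (Sv :\ v1) (restr L (nbrs e Sv v1) k w) (nth x0 (nbrs e Sv v1) k) w).

Definition Ff (R : realFieldType) (T : finType) (e : rel T) n (Sv : {set T})
  (L : T -> {set 'I_4}) (v1 x0 : T) (j : 'I_4) : R :=
  if j \in L v1 then Gf R e n Sv L v1 x0 j / \sum_(w in L v1) Gf R e n Sv L v1 x0 w else 0.

Definition Yf (R : realFieldType) (T : finType) (e : rel T) n (Sv : {set T})
  (L : T -> {set 'I_4}) (v1 v2 : T) (j : 'I_4) : R :=
  Pn R e n Sv (restr L [:: v1; v2] 1 j) v2 j.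

Lemma Pn_deg2 (R : realFieldType) (T : finType) (e : rel T) (n : nat) (S : {set T}) (L : T -> {set 'I_4}) (u : T) (c : 'I_4) (a b : T) :
  c \in L u -> nbrs e S u = [:: a; b] ->
  let v1 := if swapb e S L c a b then b else a in
  let v2 := if swapb e S L c a b then a else b in
  Pn R e n.+1 S L u c =
  (1 - Ff R e n (S :\ u) L v1 u c) * (1 - Yf R e n (S :\ u) L v1 v2 c) /
  \sum_(j in L u) (1 - Ff R e n (S :\ u) L v1 u j) * (1 - Yf R e n (S :\ u) L v1 v2 j).
Proof. by move=> hc hn /=; rewrite hc hn. Qed.

Lemma Pn_deg1 (R : realFieldType) (T : finType) (e : rel T) (n : nat) (S : {set T}) (L : T -> {set 'I_4}) (u : T) (c : 'I_4) (a : T) :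
  c \in L u -> nbrs e S u = [:: a] ->
  Pn R e n.+1 S L u c =
        if #|L u| == 2%N
          then
           (1 - Pn R e n (S :\ u) L a c) /
           (2 - Pn R e n (S :\ u) L a c -
            Pn R e n (S :\ u) L a (odflt c [pick j in L u :\ c ]))
          else
           if #|L u| == 4%N
           then (1 - Pn R e n (S :\ u) L a c) / 3
           else
            if #|L u| == 3%N
            then
             (1 - Pn R e n (S :\ u) L a c) /
             (2 + Pn R e n (S :\ u) L a (odflt c [pick j in ~: L u ]))
            else 0.
Proof. by move=> hc hn /=; rewrite hc hn. Qed.

Lemma Pn_deg0 (R : realFieldType) (T : finType) (e : rel T) (n : nat) (S : {set T}) (L : T -> {set 'I_4}) (u : T) (c : 'I_4) :
  c \in L u -> nbrs e S u = [::] -> Pn R e n S L u c = (#|L u|%:R)^-1.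
Proof. by move=> hc hn; case: n => [|n] /=; rewrite hc ?hn. Qed.

Lemma Pn_out (R : realFieldType) (T : finType) (e : rel T) (n : nat) (S : {set T}) (L : T -> {set 'I_4}) (u : T) (c : 'I_4) :
  c \notin L u -> Pn R e n S L u c = 0.
Proof. by move=> hc; case: n => [|n] /=; rewrite hc. Qed.

Lemma Pn_0 (R : realFieldType) (T : finType) (e : rel T) (S : {set T}) (L : T -> {set 'I_4}) (u : T) (c : 'I_4) :
  c \in L u -> Pn R e 0 S L u c = (#|L u|%:R)^-1.
Proof. by move=> hc /=; rewrite hc. Qed.

Lemma Gf_bounds (R : realFieldType) (T : finType) (e : rel T) (e_sym : symmetric e)
  (e_irr : irreflexive e) n (Sv : {set T}) (L : T -> {set 'I_4}) (v1 x0 : T) :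
  Good R e n -> AllR e Sv L -> v1 \in Sv -> forall w,
  (1/2)^+(size (nbrs e Sv v1)) <= Gf R e n Sv L v1 x0 w <= 1.
Proof.
move=> IH hA hv1 w; rewrite /Gf.
set us := nbrs e Sv v1.
have hk : forall k : 'I_(size us), 1/2 <= 1 - Pn R e n (Sv :\ v1) (restr L us k w) (nth x0 us k) w <= 1.
  move=> k.
  have hr : reachable e (Sv :\ v1) (restr L us k w) (nth x0 us k).
    apply: (reach_step e_sym e_irr hA hv1).
    - by move=> x hx; apply: restr_out.
    - by move=> x; apply: restr_card.
    - by apply: mem_nth.
    - by apply: restr_nth => //; apply: nbrs_uniq.
  have [h1 h2 _] := IH _ _ _ w hr.
  apply/andP; split; lra.
apply/andP; split.
- have -> : (1/2 : R) ^+ size us = \prod_(k < size us) (1/2 : R).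
    by rewrite prodr_const card_ord.
  apply: ler_prod => k _; have := hk k; move=> /andP[h1 h2]; apply/andP; split => //; lra.
- apply: (@le_trans _ _ (\prod_(k < size us) (1 : R))); last by rewrite prodr_const expr1n.
  apply: ler_prod => k _; have := hk k; move=> /andP[h1 h2]; apply/andP; split => //; lra.
Qed.

Lemma F_facts_at (R : realFieldType) (T : finType) (e : rel T) (e_sym : symmetric e)
  (e_irr : irreflexive e) n (S : {set T}) (L : T -> {set 'I_4}) (u v1 : T) :
  Good R e n -> AllR e S L -> u \in S -> v1 \in nbrs e S u ->
  [/\ (size (nbrs e (S :\ u) v1) <= 2)%N, deg e S v1 = (size (nbrs e (S :\ u) v1)).+1,
      (size (nbrs e (S :\ u) v1) + 2 <= #|L v1|)%N &
  [/\ forall j, 0 <= Ff R e n (S :\ u) L v1 u j <= 4/7,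
      \sum_j Ff R e n (S :\ u) L v1 u j = 1,
      ((#|L v1| <= 3)%N -> forall j, Ff R e n (S :\ u) L v1 u j <= 1/2) &
      (forall j, j \in L v1 -> 1/16 <= Ff R e n (S :\ u) L v1 u j)]].
Proof.
move=> IH hA hu hv1.
set m := size (nbrs e (S :\ u) v1).
set f := Ff R e n (S :\ u) L v1 u.
have hA' : AllR e (S :\ u) L by apply: (AllR_step e_sym hA hu) => // x; lia.
have hr : reachable e (S :\ u) L v1 by apply: (reach_step e_sym e_irr hA hu) => // x; lia.
have hv1S : v1 \in S :\ u by case: hr.
have hv1S' : v1 \in S by move: hv1; rewrite mem_nbrs => /andP[].
have hvu : u \in nbrs e S v1 by apply: nbrs_sym.
have hdeg : deg e S v1 = m.+1.
  have := degD1_eq hvu; rewrite /deg -/m => ->.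
  by case: (nbrs e S v1) hvu.
have [hd1 hd2] := hA v1 hv1S'.
have hm2 : (m <= 2)%N by lia.
have hL : (m + 2 <= #|L v1|)%N by lia.
have hG := Gf_bounds e_sym e_irr u IH hA' hv1S.
split => //.
have hm3 : (m = 0 \/ m = 1 \/ m = 2)%N by lia.
have hcardR : forall k : nat, (m + 2 <= k)%N -> (k <= 4)%N -> 3/4 <= (k.-1)%:R * (1/2 : R)^+m.
  move=> k h1 h2.
  have : (k = 2 \/ k = 3 \/ k = 4)%N by lia.
  case: hm3 => [hm|[hm|hm]]; rewrite hm ?expr0 ?expr1 ?expr2;
  case=> [hk|[hk|hk]]; rewrite hk /=; try (exfalso; lia); lra.
have [hf1 hf2 hf3 hf4] := @f_facts R (L v1) (Gf R e n (S :\ u) L v1 u) ((1/2)^+m) f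
  (exprn_gt0 _ (ltac:(lra) : (0:R) < 1/2)) hG (hcardR _ hL (card4 _)) (fun j => erefl).
split => //.
- move=> h3; apply: hf3.
  have : (#|L v1| = 2 \/ #|L v1| = 3)%N by lia.
  case: hm3 => [hm|[hm|hm]]; rewrite hm ?expr0 ?expr1 ?expr2;
  case=> hk; rewrite hk /=; try (exfalso; lia); lra.
- apply: hf4. case: hm3 => [hm|[hm|hm]]; rewrite hm ?expr0 ?expr1 ?expr2; lra.
Qed.

Lemma sum_predC1 (R : realFieldType) (F : 'I_4 -> R) c :
  \sum_j F j = F c + \sum_(j | j != c) F j.
Proof. by rewrite (bigD1 c). Qed.

Lemma sum_others_1f (R : realFieldType) (f : 'I_4 -> R) c :
  \sum_j f j = 1 -> \sum_(j | j != c) (1 - f j) = 2 + f c.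
Proof.
move=> hs; rewrite sumrB sumr_const.
have -> : #|[pred j : 'I_4 | j != c]| = 3%N.
  by have := cardC1 c; rewrite card_ord.
have := sum_predC1 f c; rewrite hs => ->.
rewrite -mulr_natl; lra.
Qed.

Lemma A_bounds (R : realFieldType) (f y : R) :
  0 <= f <= 1 -> 0 <= y <= 1/2 ->
  (1 - f) / 2 <= (1 - f) * (1 - y) <= 1 - f.
Proof. move=> /andP[h1 h2] /andP[h3 h4]; apply/andP; split; nra. Qed.

Lemma ratio_gen (R : realFieldType) (X Y f : R) :
  (1-f)/2 <= X <= 1-f -> (2+f)/2 <= Y <= 2+f -> 0 <= f <= 4/7 ->
  [/\ 0 <= X/(X+Y), X/(X+Y) <= 1/2 & 1/13 <= X/(X+Y)].
Proof.
move=> /andP[h1 h2] /andP[h3 h4] /andP[h5 h6].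
have hp : 0 < X + Y by lra.
split.
- apply: divr_ge0; lra.
- rewrite ler_pdivrMr //; lra.
- rewrite ler_pdivlMr //; lra.
Qed.

Lemma deg2_ratio (R : realFieldType) (f y : 'I_4 -> R) c :
  (forall j, 0 <= f j <= 4/7) -> \sum_j f j = 1 -> (forall j, 0 <= y j <= 1/2) ->
  let r := (1 - f c) * (1 - y c) / \sum_j (1 - f j) * (1 - y j) in
  [/\ 0 <= r, r <= 1/2 & 1/13 <= r].
Proof.
move=> hf hs hy r.
have hf1 j : 0 <= f j <= 1 by have := hf j; move=> /andP[h1 h2]; apply/andP; split; lra.
rewrite /r (sum_predC1 _ c); apply: ratio_gen.
- exact: A_bounds.
- rewrite -(sum_others_1f c hs); apply/andP; split.
  + rewrite mulr_suml; apply: ler_sum => j _; by case/andP: (A_bounds (hf1 j) (hy j)).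
  + apply: ler_sum => j _; by case/andP: (A_bounds (hf1 j) (hy j)).
- exact: hf.
Qed.

Lemma base_ok (R : realFieldType) (k : nat) : (2 <= k <= 4)%N ->
  [/\ 0 <= (k%:R : R)^-1, (k%:R : R)^-1 <= 1/2 & lb R k <= (k%:R)^-1].
Proof.
move=> hk; have : (k = 2 \/ k = 3 \/ k = 4)%N by lia.
by case=> [->|[->|->]]; rewrite /lb /=; split; lra.
Qed.

Lemma card4_setT (A : {set 'I_4}) : #|A| = 4%N -> A = [set: 'I_4].
Proof. move=> h; apply/eqP; by rewrite eqEcard subsetT cardsT card_ord h. Qed.

Lemma sum_setT (R : realFieldType) (A : {set 'I_4}) (F : 'I_4 -> R) :
  #|A| = 4%N -> \sum_(j in A) F j = \sum_j F j.
Proof. by move/card4_setT => ->; apply: eq_bigl => j; rewrite inE. Qed.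

Lemma good0 (R : realFieldType) (T : finType) (e : rel T) : Good R e 0.
Proof.
move=> S L u c [uS [hA [hd1 hd2]]].
case: (boolP (c \in L u)) => hc.
  rewrite Pn_0 //; have [|h1 h2 h3] := @base_ok R #|L u|; last by split.
  rewrite card4; lia.
by rewrite Pn_out //; split; [lra | lra | move=> h; exfalso; by move/negP: hc].
Qed.

Lemma nbrs_in (T : finType) (e : rel T) (S : {set T}) u w : w \in nbrs e S u -> w \in S.
Proof. by rewrite mem_nbrs => /andP[]. Qed.

Lemma good_step (R : realFieldType) (T : finType) (e : rel T) (e_sym : symmetric e)
  (e_irr : irreflexive e) n : Good R e n -> Good R e n.+1.
Proof.
move=> IH S L u c hr.
case: (boolP (c \in L u)) => hc; last first.
  by rewrite Pn_out //; split; [lra | lra | move=> h; exfalso; by move/negP: hc].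
have [uS [hA [hd1 hd2]]] := hr.
have hL4 := card4 (L u).
case hns: (nbrs e S u) => [|a [|b [|x [|y s]]]].
- rewrite Pn_deg0 //; have [|h1 h2 h3] := @base_ok R #|L u|; last by split.
  rewrite card4; lia.
- have hdeg : deg e S u = 1%N by rewrite /deg hns.
  have ha : a \in nbrs e S u by rewrite hns inE eqxx.
  have hra : reachable e (S :\ u) L a by apply: (reach_step e_sym e_irr hA uS) => // x; lia.
  rewrite (Pn_deg1 R n hc hns).
  have := IH _ _ _ c hra => -[hx1 hx2 _].
  have : (#|L u| = 3 \/ #|L u| = 4)%N by lia.
  case=> hk; rewrite hk /= /lb /=.
  + have := IH _ _ _ (odflt c [pick j in ~: L u]) hra => -[hz1 hz2 _].
    move: hz1 hz2; set z := Pn R e n (S :\ u) L a (odflt c [pick j in ~: L u]) => hz1 hz2.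
    have hp : 0 < 2 + z by lra.
    split.
    * apply: divr_ge0; lra.
    * rewrite ler_pdivrMr //; lra.
    * move=> _; rewrite ler_pdivlMr //; lra.
  + split.
    * apply: divr_ge0; lra.
    * rewrite ler_pdivrMr //; lra.
    * move=> _; rewrite ler_pdivlMr //; lra.
- have hdeg : deg e S u = 2%N by rewrite /deg hns.
  have hk : #|L u| = 4%N by lia.
  rewrite (Pn_deg2 R n hc hns).
  set sw := swapb e S L c a b.
  set v1 := if sw then b else a.
  set v2 := if sw then a else b.
  have hab : a != b by have := nbrs_uniq e S u; rewrite hns /= inE andbT.
  have hv1 : v1 \in nbrs e S u by rewrite hns /v1; case: ifP => _; rewrite !inE eqxx ?orbT.
  have hv2 : v2 \in nbrs e S u by rewrite hns /v2; case: ifP => _; rewrite !inE eqxx ?orbT.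
  have hv12 : v2 != v1 by rewrite /v1 /v2; case: ifP => _; rewrite // eq_sym.
  have [_ _ _ [hf1 hf2 _ _]] := F_facts_at e_sym e_irr IH hA uS hv1.
  have hy : forall j, 0 <= Yf R e n (S :\ u) L v1 v2 j <= 1/2.
    move=> j.
    have hr2 : reachable e (S :\ u) (restr L [:: v1; v2] 1 j) v2.
      apply: (reach_step e_sym e_irr hA uS) => //.
      - move=> x hx; apply: restr_out; rewrite !inE; apply/negP => /orP[] /eqP E;
        by move: hx; rewrite E ?hv1 ?hv2.
      - by move=> x; apply: restr_card.
      - by rewrite /restr /= inE (negbTE hv12).
    have := IH _ _ _ j hr2 => -[h1 h2 _]; rewrite /Yf; apply/andP; split => //.
  rewrite (sum_setT _ hk).
  have [r1 r2 r3] := deg2_ratio c hf1 hf2 hy.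
  split => // _; rewrite /lb hk /=; exact: r3.
- have : deg e S u = 3%N by rewrite /deg hns.
  lia.
- have : (deg e S u >= 4)%N by rewrite /deg hns.
  lia.
Qed.

Lemma good_all (R : realFieldType) (T : finType) (e : rel T) (e_sym : symmetric e)
  (e_irr : irreflexive e) n : Good R e n.
Proof. elim: n => [|n IH]; [exact: good0 | exact: good_step]. Qed.

Lemma final_ratio (R : realFieldType) (X Y : R) :
  0 <= X -> 0 < Y -> 14 * X <= 13 * Y -> X / (X + Y) <= 13%:R / 27%:R.
Proof. move=> h1 h2 h3; rewrite ler_pdivrMr; lra. Qed.

Lemma Y_uniform (R : realFieldType) (f y : 'I_4 -> R) i (tau : R) :
  (forall j, 0 <= f j <= 1) -> \sum_j f j = 1 -> 0 <= tau ->
  (forall j, j != i -> tau <= 1 - y j) ->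
  tau * (2 + f i) <= \sum_(j | j != i) (1 - f j) * (1 - y j).
Proof.
move=> hf hs ht hy; rewrite -(sum_others_1f i hs) mulr_sumr.
apply: ler_sum => j hj; rewrite mulrC; apply: ler_wpM2l; last exact: hy.
by case/andP: (hf j) => _ h; lra.
Qed.

Lemma Y_ind (R : realFieldType) (f y : 'I_4 -> R) i (beta : R) (B : {set 'I_4}) :
  (forall j, 0 <= f j <= 1/2) -> \sum_j f j = 1 -> f i = 0 -> 0 <= beta ->
  (forall j, j != i -> 1/2 + beta * (j \in B)%:R <= 1 - y j) ->
  1 + beta / 2 * (#|[pred j | (j != i) && (j \in B)]|)%:R
    <= \sum_(j | j != i) (1 - f j) * (1 - y j).
Proof.
move=> hf hs hi hb hy.
apply: (@le_trans _ _ (\sum_(j | j != i) (1 - f j) * (1/2 + beta * (j \in B)%:R))); last first.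
  apply: ler_sum => j hj; apply: ler_wpM2l; last exact: hy.
  by case/andP: (hf j) => _ h; lra.
under eq_bigr do rewrite mulrDr.
rewrite big_split /= -mulr_suml (sum_others_1f i hs) hi.
have -> : (#|[pred j | (j != i) && (j \in B)]|)%:R =
          \sum_(j | j != i) (j \in B)%:R :> R.
  rewrite -sum1_card natr_sum big_mkcondr /=.
  by apply: eq_bigr => j _; case: (j \in B).
rewrite mulr_sumr.
have : beta / 2 * \sum_(j | j != i) (j \in B)%:R <=
       \sum_(j | j != i) (1 - f j) * (beta * (j \in B)%:R).
  rewrite mulr_sumr; apply: ler_sum => j _.
  case/andP: (hf j) => h1 h2; case: (j \in B) => /=; nra.
rewrite mulr_sumr; lra.
Qed.

Lemma t_lin (R : realFieldType) (tau q r : R) :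
  0 <= r -> tau * (2 + r) <= 1 + q + r -> tau <= 1 - (1 - q) / (2 + r).
Proof.
move=> h1 h2.
have : (1 - q) / (2 + r) <= 1 - tau by rewrite ler_pdivrMr; lra.
lra.
Qed.

Lemma card_pred_setD1 (B : {set 'I_4}) i :
  #|[pred j | (j != i) && (j \in B)]| = #|B :\ i|.
Proof. by apply: eq_card => j; rewrite !inE. Qed.

Lemma notin_card3 (A : {set 'I_4}) i : i \notin A -> (#|A| <= 3)%N.
Proof.
move=> hi; have := cardsC A; rewrite card_ord.
have : (0 < #|~: A|)%N by apply/card_gt0P; exists i; rewrite inE.
lia.
Qed.

Lemma notin_card3_all (A : {set 'I_4}) i j : i \notin A -> #|A| = 3%N -> j != i -> j \in A.
Proof.
move=> hi h3 hj; apply/negPn/negP => hjA.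
have := cardsC A; rewrite card_ord h3 => h.
have : (1 < #|~: A|)%N.
  rewrite (cardsD1 i) inE hi /= ltnS; apply/card_gt0P; exists j; by rewrite !inE hj.
lia.
Qed.

Lemma t_gen (R : realFieldType) (bq br tau q r : R) :
  0 <= br -> br <= r -> bq <= q -> tau <= 1 ->
  tau * (2 + br) <= 1 + bq + br -> tau <= 1 - (1 - q) / (2 + r).
Proof.
move=> h1 h2 h3 h4 h5; apply: t_lin; first lra.
have : tau * r <= tau * br + (r - br).
  have : (tau - 1) * (r - br) <= 0 by apply: mulr_le0_ge0; lra.
  lra.
lra.
Qed.

Lemma fin_c (R : realFieldType) (X Sm c : R) :
  c <= Sm -> 14 * X <= 13 * c -> 14 * X <= 13 * Sm.
Proof. move=> h1 h2; lra. Qed.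

Tactic Notation "lraw" ne_hyp_list(hs) := revert hs; clear; lra.
Tactic Notation "lraw" := clear; lra.


Unset Implicit Arguments.

Theorem proposition10 (R : realFieldType) (T : finType) (e : rel T)
  (e_sym : symmetric e) (e_irr : irreflexive e)
  (S : {set T}) (L : T -> {set 'I_4}) (v : T) (i : 'I_4) :
  reachable e S L v -> deg e S v = 2%N ->
  triangle_at e S v \/
  (forall D : int, 2 <= D -> P R e S L v i D <= 13%:R / 27%:R).
Proof.
move=> hr hdeg.
have [vS [hA [hd1 hd2]]] := hr.
have hk : #|L v| = 4%N by have := card4 (L v); lia.
case hns: (nbrs e S v) => [|a [|b [|x s]]]; try by move: hdeg; rewrite /deg hns.
have hab : a != b by have := nbrs_uniq e S v; rewrite hns /= inE andbT.
have ha : a \in nbrs e S v by rewrite hns inE eqxx.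
have hb : b \in nbrs e S v by rewrite hns !inE eqxx orbT.
case: (boolP (e a b)) => eab.
  by left; exists a, b; split.
right => D hD.
have [n hn ->] : exists2 n : nat, (2 <= n)%N & D = n.
  case: D hD => [n|n] hD; last by [].
  by exists n.
rewrite /P.
case: n hn => [|[|n0]] // _.
case: (boolP (i \in L v)) => hi; last by rewrite Pn_out //; lra.
rewrite (Pn_deg2 R n0.+1 hi hns) (sum_setT _ hk).
set sw := swapb e S L i a b.
set v1 := if sw then b else a.
set v2 := if sw then a else b.
have hv1 : v1 \in nbrs e S v by rewrite /v1; case: ifP.
have hv2 : v2 \in nbrs e S v by rewrite /v2; case: ifP.
have hv12 : v2 != v1 by rewrite /v1 /v2; case: ifP => _; rewrite // eq_sym.
have hne12 : ~~ e v1 v2 by rewrite /v1 /v2; case: ifP => _; rewrite // e_sym.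
have IH := good_all R e_sym e_irr n0.+1.
have IH0 := good_all R e_sym e_irr n0.
have [hm2 hdeg1 hL1 [hf1 hf2 hf3 hf4]] := F_facts_at e_sym e_irr IH hA vS hv1.
have hLv2 : forall j, restr L [:: v1; v2] 1 j v2 = L v2.
  by move=> j; rewrite /restr /= inE (negbTE hv12).
have hAj : forall j, AllR e (S :\ v) (restr L [:: v1; v2] 1 j).
  move=> j; apply: (AllR_step e_sym hA vS).
  - move=> y hy; apply: restr_out; rewrite !inE; apply/negP => /orP[] /eqP E;
    by move: hy; rewrite E ?hv1 ?hv2.
  - by move=> y; apply: restr_card.
have hr2 : forall j, reachable e (S :\ v) (restr L [:: v1; v2] 1 j) v2.
  move=> j; apply: (reach_step e_sym e_irr hA vS) => //.
  - move=> y hy; apply: restr_out; rewrite !inE; apply/negP => /orP[] /eqP E;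
    by move: hy; rewrite E ?hv1 ?hv2.
  - by move=> y; apply: restr_card.
have hy : forall j, 0 <= Yf R e n0.+1 (S :\ v) L v1 v2 j <= 1/2.
  move=> j; have := IH _ _ _ j (hr2 j) => -[h1 h2 _]; rewrite /Yf; apply/andP; split => //.
set y := Yf R e n0.+1 (S :\ v) L v1 v2 in hy *.
set F := Ff R e n0.+1 (S :\ v) L v1 v in hf1 hf2 hf3 hf4 *.
have hF01 : forall j, 0 <= F j <= 1.
  by move=> j; case/andP: (hf1 j) => h1 h2; apply/andP; split; lraw h1 h2.
have hy' : forall j, 0 <= y j <= 1/2 by [].
rewrite (sum_predC1 _ i).
have := @A_bounds R (F i) (y i) (hF01 i) (hy i) => /andP[hX1 hX2].
have hYh := Y_uniform (i := i) (y := y) hF01 hf2 (ltac:(lraw) : (0:R) <= 1/2)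
  (fun j _ => (ltac:(case/andP: (hy j) => h1 h2; lraw h1 h2) : 1/2 <= 1 - y j)).
have hFi0 := hf1 i.
apply: final_ratio; [lraw hX1 hFi0 | lraw hYh hFi0 | ].
case: (boolP (i \in L v1)) => hi1.
  have := hf4 i hi1 => h; lraw h hX2 hYh hFi0.
have hFi : F i = 0 by rewrite /F /Ff (negbTE hi1).
have hc1 := notin_card3 hi1.
have hFh : forall j, 0 <= F j <= 1/2.
  by move=> j; have := hf3 hc1 j; have := hf1 j => /andP[h1 _] h2; apply/andP; split.
rewrite hFi.
have hdeg12 : (deg e S v2 <= deg e S v1)%N.
  rewrite /v1 /v2 /sw /swapb; case: ifP => h.
    case/orP: h => [h|/and4P[/eqP h1 /eqP h2 _ _]]; [exact: ltnW | by rewrite h1 h2].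
  by move/negbT: h; rewrite negb_or => /andP[h _]; rewrite leqNgt.
have hvv2 : v \in nbrs e S v2 by apply: nbrs_sym.
have hdeg2' := degD1_eq hvv2.
have hdeg2pos : (0 < deg e S v2)%N by rewrite /deg; case: (nbrs e S v2) hvv2.
have hv2S : v2 \in S by apply: nbrs_in hv2.
have [hA21 hA22] := hA v2 hv2S.
have hv2S' : v2 \in S :\ v by case: (hr2 i).
have hyi0 : i \notin L v2 -> y i = 0.
  by move=> hi2; rewrite /y /Yf Pn_out // hLv2.
clearbody v1 v2 sw.
case hns2 : (nbrs e (S :\ v) v2) => [|w [|w' s']]; last first.
  have h0 : deg e (S :\ v) v2 = (size s').+2 by rewrite /deg hns2.
  by move: h0 hdeg2' hdeg12 hdeg1 hL1 hc1 (card4 (L v1)); clear; lia.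
-
  have h0 : deg e (S :\ v) v2 = 1%N by rewrite /deg hns2.
  have hdv2 : deg e S v2 = 2%N by move: h0 hdeg2' hdeg2pos; clear; lia.
  have hw : w \in nbrs e (S :\ v) v2 by rewrite hns2 inE.
  have hwv1 : w != v1.
    apply/eqP => E; move: hw; rewrite mem_nbrs E => /andP[_ h].
    by rewrite e_sym h in hne12.
  have hLw : forall j, restr L [:: v1; v2] 1 j w = L w.
    by move=> j; rewrite /restr /= inE (negbTE hwv1).
  have hrw : forall j, reachable e (S :\ v :\ v2) (restr L [:: v1; v2] 1 j) w.
    move=> j; apply: (reach_step e_sym e_irr (hAj j) hv2S') => //; move=> x; exact: leq_addr.
  have hQ : forall j c,
     [/\ 0 <= Pn R e n0 (S :\ v :\ v2) (restr L [:: v1; v2] 1 j) w c,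
         Pn R e n0 (S :\ v :\ v2) (restr L [:: v1; v2] 1 j) w c <= 1/2 &
         (c \in L w -> lb R #|L w| <= Pn R e n0 (S :\ v :\ v2) (restr L [:: v1; v2] 1 j) w c)].
    by move=> j c; have := IH0 _ _ _ c (hrw j); rewrite hLw.
  have hk2 : (#|L v2| = 3 \/ #|L v2| = 4)%N by move: (card4 (L v2)) hA22 hdv2; clear; lia.
  case: hk2 => hk2.
  + have hy1 : forall j, j \in L v2 -> y j =
       (1 - Pn R e n0 (S :\ v :\ v2) (restr L [:: v1; v2] 1 j) w j) /
       (2 + Pn R e n0 (S :\ v :\ v2) (restr L [:: v1; v2] 1 j) w (odflt j [pick c in ~: L v2])).
      by move=> j hj; rewrite /y /Yf (Pn_deg1 R n0 _ hns2) ?hLv2 ?hk2.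
    case: (boolP (i \in L v2)) => hi2.
    * have [q1 q2 _] := hQ i i.
      have [z1 z2 _] := hQ i (odflt i [pick c in ~: L v2]).
      have hyi : 1/5 <= y i.
        rewrite hy1 // ler_pdivlMr; [lraw q2 z2 | lraw z1].
      apply: (fin_c (c := 1)); first by lraw hYh hFi.
      by lraw hyi.
    * have hpick : forall j, odflt j [pick c in ~: L v2] = i.
        move=> j; case: pickP => [c hc|h] /=.
          case: (eqVneq c i) => // hci.
          by have := notin_card3_all hi2 hk2 hci; rewrite inE in hc; rewrite (negbTE hc).
        by have := h i; rewrite inE hi2.
      rewrite (hyi0 hi2).
      have hyj : forall j, j != i -> y j =
         (1 - Pn R e n0 (S :\ v :\ v2) (restr L [:: v1; v2] 1 j) w j) /
         (2 + Pn R e n0 (S :\ v :\ v2) (restr L [:: v1; v2] 1 j) w i).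
        by move=> j hj; rewrite hy1 ?hpick //; apply: notin_card3_all hi2 hk2 hj.
      have /andP[hkw1 hkw2] : (2 <= #|L w| <= 4)%N.
        have [_ [_ [_ h]]] := hrw i; rewrite hLw in h; move: h (card4 (L w)); clear; lia.
      have hkw : (#|L w| = 2 \/ #|L w| = 3 \/ #|L w| = 4)%N by move: hkw1 hkw2; clear; lia.
      case: hkw => [hkw|[hkw|hkw]].
      - case: (boolP (i \in L w)) => hiw.
        + have hY := Y_uniform (i := i) (y := y) hF01 hf2 (ltac:(lraw) : (0:R) <= 3/5).
          apply: (fin_c (c := 3/5 * (2 + F i))); last by rewrite hFi; lraw.
          apply: hY => j hj; rewrite hyj //; have [q1 q2 _] := hQ j j; have [r1 r2 r3] := hQ j i.
          have := r3 hiw; rewrite /lb hkw /= => r4.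
          by apply: (t_gen (bq := 0) (br := 1/2)) => //; lraw.
        + have hY := @Y_ind R F y i (1/4) (L w) hFh hf2 hFi (ltac:(lraw)).
          have hcw := cardsD1 i (L w); rewrite (negbTE hiw) add0n in hcw.
          rewrite card_pred_setD1 -hcw hkw in hY.
          apply: (fin_c (c := 1 + 1 / 4 / 2 * 2%:R)); last by lraw.
          apply: hY => j hj; rewrite hyj //; have [q1 q2 q3] := hQ j j; have [r1 r2 r3] := hQ j i.
          case: (boolP (j \in L w)) => hjw /=.
            have := q3 hjw; rewrite /lb hkw /= => q4.
            by apply: (t_gen (bq := 1/2) (br := 0)) => //; lraw.
          by apply: (t_gen (bq := 0) (br := 0)) => //; lraw.
      - case: (boolP (i \in L w)) => hiw.
        + have hY := Y_uniform (i := i) (y := y) hF01 hf2 (ltac:(lraw) : (0:R) <= 6/11).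
          apply: (fin_c (c := 6/11 * (2 + F i))); last by rewrite hFi; lraw.
          apply: hY => j hj; rewrite hyj //; have [q1 q2 _] := hQ j j; have [r1 r2 r3] := hQ j i.
          have := r3 hiw; rewrite /lb hkw /= => r4.
          by apply: (t_gen (bq := 0) (br := 1/5)) => //; lraw.
        + have hY := Y_uniform (i := i) (y := y) hF01 hf2 (ltac:(lraw) : (0:R) <= 3/5).
          apply: (fin_c (c := 3/5 * (2 + F i))); last by rewrite hFi; lraw.
          apply: hY => j hj; rewrite hyj //; have [q1 q2 q3] := hQ j j; have [r1 r2 r3] := hQ j i.
          have := q3 (notin_card3_all hiw hkw hj); rewrite /lb hkw /= => q4.
          by apply: (t_gen (bq := 1/5) (br := 0)) => //; lraw.
      - have hiw : i \in L w by rewrite (card4_setT hkw) inE.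
        have hY := Y_uniform (i := i) (y := y) hF01 hf2 (ltac:(lraw) : (0:R) <= 5/9).
        apply: (fin_c (c := 5/9 * (2 + F i))); last by rewrite hFi; lraw.
        apply: hY => j hj; rewrite hyj //; have [q1 q2 q3] := hQ j j; have [r1 r2 r3] := hQ j i.
        have := r3 hiw; have := q3 (ltac:(by rewrite (card4_setT hkw) inE)); rewrite /lb hkw /= => q4 r4.
        by apply: (t_gen (bq := 1/13) (br := 1/13)) => //; lraw.
  + have hy1 : forall j, y j <= 1/3.
      move=> j; case: (boolP (j \in L v2)) => hj.
        rewrite /y /Yf (Pn_deg1 R n0 _ hns2) ?hLv2 ?hk2 //=.
        have [q1 q2 _] := hQ j j.
        by rewrite ler_pdivrMr; lraw q1.
      by rewrite /y /Yf Pn_out ?hLv2 //; lraw.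
    have hY := Y_uniform (i := i) (y := y) hF01 hf2 (ltac:(lraw) : (0:R) <= 2/3).
    apply: (fin_c (c := 2/3 * (2 + F i))); last by rewrite hFi; case/andP: (hy i) => h1 h2; lraw h1.
    by apply: hY => j hj; have := hy1 j; lraw.
-
  have h0 : deg e (S :\ v) v2 = 0%N by rewrite /deg hns2.
  have hdv2 : deg e S v2 = 1%N by move: h0 hdeg2' hdeg2pos; clear; lia.
  have hyv : forall j, y j = if j \in L v2 then (#|L v2|%:R)^-1 else 0.
    move=> j; rewrite /y /Yf; case: ifP => hj.
      by rewrite Pn_deg0 ?hLv2.
    by rewrite Pn_out // hLv2 hj.
  have hk2 : (#|L v2| = 2 \/ #|L v2| = 3 \/ #|L v2| = 4)%N by move: (card4 (L v2)) hA22 hdv2; clear; lia.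
  case: (boolP (i \in L v2)) => hi2.
  + rewrite hyv hi2.
    have hK : 1/4 <= (#|L v2|%:R : R)^-1 <= 1/2 by case: hk2 => [->|[->|->]] /=; lraw.
    have hY := Y_uniform (i := i) (y := y) hF01 hf2 (ltac:(lraw hK) : (0:R) <= 1 - (#|L v2|%:R)^-1).
    apply: (fin_c (c := (1 - (#|L v2|%:R)^-1) * (2 + F i))); last by rewrite hFi; lraw hK.
    by apply: hY => j hj; rewrite hyv; case: ifP => _; lraw hK.
  + rewrite (hyi0 hi2).
    case: hk2 => [hk2|hk2].
    * have hY := @Y_ind R F y i (1/2) (~: L v2) hFh hf2 hFi (ltac:(lraw)).
      have hc1' : #|[pred j | (j != i) && (j \in ~: L v2)]| = 1%N.
        rewrite card_pred_setD1.
        have := cardsC (L v2); rewrite card_ord hk2 (cardsD1 i (~: L v2)) inE hi2 /=.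
        move=> h; apply: (@addnI 3); rewrite (_ : (3 + 1 = 4)%N) // -h addnA.
      rewrite hc1' in hY.
      apply: (fin_c (c := 1 + 1 / 2 / 2 * 1%:R)); last by lraw.
      apply: hY => j hj; rewrite hyv inE hk2; case: (j \in L v2) => /=; lraw.
    * have hK : (#|L v2|%:R : R)^-1 <= 1/3 by case: hk2 => ->; lraw.
      have hY := Y_uniform (i := i) (y := y) hF01 hf2 (ltac:(lraw) : (0:R) <= 2/3).
      apply: (fin_c (c := 2/3 * (2 + F i))); last by rewrite hFi; lraw.
      by apply: hY => j hj; rewrite hyv; case: ifP => _; lraw hK.
Qed.
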